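(* Let $f(z)=z+\sum_{k=2}^{\infty}a_kz^k$ be analytic in $\mathbb{D}=\{z:|z|<1\}$ with $zf'(z)-f(z)=\frac12 z^2\phi(z)$ for all $z\in\mathbb{D}$, where $\phi$ is analytic in $\mathbb{D}$ and $|\phi(z)|\le1$, and let $s_n(z;f)=z+\sum_{k=2}^n a_kz^k$. Then $\mathrm{Re}\, s_n'(z;f)>0$ in $|z|\le r_0$ for all $n\ge12$, where $r_0=0.547$. *)

(* Defs.v *)
From Stdlib Require Import Reals.
From Coquelicot Require Import Coquelicot.

(* C viewed as a normed module over itself (so is_derive is the complex derivative) *)
Definition CNM : NormedModule C_AbsRing := AbsRing_NormedModule C_AbsRing.

Definition in_disk (z : C) : Prop := (Cmod z < 1)%R.

Definition C_is_derive (g : C -> C) (z l : C) : Prop :=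
  @is_derive C_AbsRing CNM g z l.

Definition analytic_in_disk (g : C -> C) : Prop :=
  forall z, in_disk z -> exists l, C_is_derive g z l.

Definition tail_series (a : nat -> C) (z v : C) : Prop :=
  @is_series C_AbsRing CNM (fun k => Cmult (a (k + 2)%nat) (Cpow z (k + 2))) v.

Definition partial_sum (a : nat -> C) (n : nat) (z : C) : C :=
  Cplus z (@sum_n_m C_AbelianGroup (fun k => Cmult (a k) (Cpow z k)) 2 n).

(* Main.v *)
Require Import Defs.
From Stdlib Require Import Reals.
From Coquelicot Require Import Coquelicot.
From Stdlib Require Import Lra Lia.


Lemma series_transfer : forall a l, @is_series C_AbsRing C_CompleteNormedModule a l -> @is_series C_AbsRing CNM a l.
Proof.
  intros a l H P [eps HP].
  assert (He : 0 < eps/2) by (destruct eps; simpl; lra).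
  apply (H (fun y => P y)).
  exists (mkposreal _ He). intros y [H1 H2]. apply HP.
  change (Cmod (y - l)%C < eps).
  eapply Rle_lt_trans. apply Cmod_2Rmax.
  assert (sqrt 2 < 2). { pose proof (sqrt_sqrt 2). pose proof (sqrt_pos 2). nra. }
  assert (Rmax (Rabs (fst (y - l)%C)) (Rabs (snd (y - l)%C)) < eps/2).
  { change (Rabs (fst y - fst l) < eps/2) in H1. change (Rabs (snd y - snd l) < eps/2) in H2.
    apply Rmax_lub_lt; simpl; unfold Rminus in *; assumption. }
  assert (0 <= Rmax (Rabs (fst (y - l)%C)) (Rabs (snd (y - l)%C))).
  { eapply Rle_trans. apply Rabs_pos. apply Rmax_l. }
  assert (0 < sqrt 2) by (apply sqrt_lt_R0; lra).
  nra.
Qed.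

Lemma ex_series_CNM_le : forall (a : nat -> C) (b : nat -> R),
  (forall n, Cmod (a n) <= b n) -> ex_series b -> exists l, @is_series C_AbsRing CNM a l.
Proof.
  intros a b Hab Hb.
  destruct (@ex_series_le C_AbsRing C_CompleteNormedModule a b Hab Hb) as [l Hl].
  exists l. apply series_transfer. exact Hl.
Qed.

Lemma Cmod_sum_n : forall (a : nat -> C) n,
  Cmod (@sum_n C_AbelianGroup a n) <= @sum_n R_AbelianGroup (fun k => Cmod (a k)) n.
Proof.
  intros a n. induction n.
  - rewrite !sum_O. lra.
  - rewrite !sum_Sn. eapply Rle_trans. apply Cmod_triangle.
    change (@plus R_AbelianGroup) with Rplus. lra.
Qed.

Lemma sum_n_R_le : forall (a b : nat -> R) n, (forall k, a k <= b k) ->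
  @sum_n R_AbelianGroup a n <= @sum_n R_AbelianGroup b n.
Proof.
  intros a b n H. induction n.
  - rewrite !sum_O. apply H.
  - rewrite !sum_Sn. change (@plus R_AbelianGroup) with Rplus. specialize (H (S n)). lra.
Qed.

Lemma geom_sum_le : forall L p n, 0 <= L -> 0 <= p < 1 ->
  @sum_n R_AbelianGroup (fun k => L * p ^ k) n <= L / (1 - p).
Proof.
  intros L p n HL Hp.
  assert (forall n, @sum_n R_AbelianGroup (fun k => L * p ^ k) n = L * (1 - p ^ (S n)) / (1 - p)).
  { induction n0.
    - rewrite sum_O. simpl. field. lra.
    - rewrite sum_Sn, IHn0. change (@plus R_AbelianGroup) with Rplus. simpl. field. lra. }
  rewrite H. unfold Rdiv. apply Rmult_le_compat_r.
  apply Rlt_le, Rinv_0_lt_compat; lra.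
  assert (0 <= p ^ S n) by (apply pow_le; lra). nra.
Qed.

Lemma norm_series_le : forall (a : nat -> C) l B, @is_series C_AbsRing CNM a l ->
  (forall n, Cmod (@sum_n C_AbelianGroup a n) <= B) -> Cmod l <= B.
Proof.
  intros a l B Hl HB.
  assert (Hlim : is_lim_seq (fun n => Cmod (@sum_n C_AbelianGroup a n)) (Cmod l)).
  { exact (filterlim_comp _ _ _ (fun n => @sum_n CNM a n) (@norm C_AbsRing CNM) eventually (locally l) _ Hl (filterlim_norm l)). }
  pose proof (is_lim_seq_le _ _ _ _ HB Hlim (is_lim_seq_const B)). simpl in H. exact H.
Qed.

Lemma lin_bound : forall t k, 0 <= t < 1 -> INR (S k) * t ^ k <= 1 / (1 - t).
Proof.
  intros t k Ht.
  assert (H : INR (S k) * t ^ k <= (1 - t ^ (S k)) / (1 - t)).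
  { induction k.
    - simpl. apply Req_le. field. lra.
    - rewrite (S_INR (S k)). rewrite (S_INR k) in *.
      change (t ^ S (S k)) with (t * (t * t ^ k)). change (t ^ S k) with (t * t ^ k) in *.
      set (P := t ^ k) in *.
      assert (0 <= P) by (apply pow_le; lra).
      assert (IH' : (INR k + 1) * P * (1 - t) <= 1 - t * P).
      { apply Rmult_le_compat_r with (r := 1 - t) in IHk; [|lra].
        replace ((1 - t * P) / (1 - t) * (1 - t)) with (1 - t * P) in IHk by (field; lra). lra. }
      assert (HP1 : P <= 1) by (unfold P; rewrite <- (pow1 k); apply pow_incr; lra).
      assert (t * (t * P) <= t * P) by (apply Rmult_le_compat_l; [lra| nra]).
      assert (t * ((INR k + 1) * P * (1 - t)) <= t * (1 - t * P)) by (apply Rmult_le_compat_l; lra).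
      assert (0 <= (1 - t) * (1 - t * P)) by (apply Rmult_le_pos; nra).
      assert (G : (INR k + 1 + 1) * (t * P) * (1 - t) <= 1 - t * (t * P)) by nra.
      apply Rmult_le_reg_r with (1 - t). lra.
      replace ((1 - t * (t * P)) / (1 - t) * (1 - t)) with (1 - t * (t * P)) by (field; lra). lra. }
  eapply Rle_trans. exact H. unfold Rdiv. apply Rmult_le_compat_r.
  apply Rlt_le, Rinv_0_lt_compat; lra.
  assert (0 <= t ^ S k) by (apply pow_le; lra). lra.
Qed.

Lemma sq_bound : forall q k, 0 <= q < 1 ->
  INR (S k) ^ 2 * q ^ k <= (1 / (1 - sqrt (sqrt q))) ^ 2 * ((sqrt (sqrt q)) ^ 2) ^ k.
Proof.
  intros q k Hq. set (u := sqrt (sqrt q)).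
  assert (Hu0 : 0 <= u) by apply sqrt_pos.
  assert (Hs : 0 <= sqrt q) by apply sqrt_pos.
  assert (Hsq : sqrt q * sqrt q = q) by (apply sqrt_sqrt; lra).
  assert (Huu : u * u = sqrt q) by (apply sqrt_sqrt; lra).
  assert (Hs1 : sqrt q < 1). { rewrite <- sqrt_1. apply sqrt_lt_1; lra. }
  assert (Hu1 : u < 1). { unfold u. rewrite <- sqrt_1. apply sqrt_lt_1; lra. }
  assert (Hq4 : q = (u ^ 2) ^ 2) by (simpl; nra).
  pose proof (lin_bound u k (conj Hu0 Hu1)) as Hl.
  assert (Hk : 0 <= INR (S k) * u ^ k) by (apply Rmult_le_pos; [apply pos_INR | apply pow_le; lra]).
  assert (E : INR (S k) ^ 2 * q ^ k = (INR (S k) * u ^ k) ^ 2 * (u ^ 2) ^ k).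
  { assert (E1 : ((u^2)^2)^k = (u^k)^2 * (u^2)^k).
    { rewrite <- !pow_mult. rewrite <- pow_add. f_equal. lia. }
    rewrite Hq4, E1. ring. }
  rewrite E. apply Rmult_le_compat_r. apply pow_le. nra.
  apply pow_incr. split; assumption.
Qed.

Lemma Cmod_RtoC_nonneg : forall r, 0 <= r -> Cmod (RtoC r) = r.
Proof. intros. rewrite Cmod_R. apply Rabs_pos_eq. auto. Qed.

Lemma coef_bound : forall (c : nat -> C) (S : C -> C) rho,
  (forall w, Cmod w < 1 -> @is_series C_AbsRing CNM (fun k => Cmult (c k) (Cpow w k)) (S w)) ->
  0 <= rho < 1 -> exists M, 0 < M /\ forall k, Cmod (c k) * rho ^ k <= M.
Proof.
  intros c S rho H Hr.
  assert (Hw : Cmod (RtoC rho) < 1) by (rewrite Cmod_RtoC_nonneg; lra).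
  specialize (H _ Hw).
  set (a := fun k => Cmult (c k) (Cpow (RtoC rho) k)) in *.
  destruct (@filterlim_bounded C_AbsRing CNM (fun n => @sum_n CNM a n)) as [M0 HM0].
  { exists (S (RtoC rho)). exact H. }
  assert (Ha : forall k, Cmod (c k) * rho ^ k = Cmod (a k)).
  { intros k. unfold a. rewrite Cmod_mult, Cmod_pow, Cmod_RtoC_nonneg by lra. reflexivity. }
  assert (HM0' : forall n, Cmod (@sum_n C_AbelianGroup a n) <= M0) by (intro n; exact (HM0 n)).
  exists (2 * Rabs M0 + 1). split. pose proof (Rabs_pos M0). lra.
  intros k. rewrite Ha. destruct k as [|k].
  - pose proof (HM0' 0%nat) as H0. rewrite sum_O in H0. pose proof (Rle_abs M0). pose proof (Rabs_pos M0). eapply Rle_trans; [exact H0|]. lra.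
  - assert (E : a (Datatypes.S k) = Cminus (@sum_n C_AbelianGroup a (Datatypes.S k)) (@sum_n C_AbelianGroup a k)).
    { rewrite sum_Sn. change (@plus C_AbelianGroup) with Cplus. ring. }
    rewrite E. unfold Cminus. eapply Rle_trans. apply Cmod_triangle. rewrite Cmod_opp.
    pose proof (HM0' (Datatypes.S k)). pose proof (HM0' k). pose proof (Rle_abs M0). pose proof (Rabs_pos M0). lra.
Qed.

Lemma pow_rem : forall (z h : C) rho k, Cmod z <= rho -> Cmod (Cplus z h) <= rho ->
  rho * Cmod (Cminus (Cminus (Cpow (Cplus z h) (Datatypes.S k)) (Cpow z (Datatypes.S k)))
                     (Cmult (Cmult (RtoC (INR (Datatypes.S k))) (Cpow z k)) h))
  <= INR (Datatypes.S k) ^ 2 * rho ^ k * Cmod h ^ 2.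
Proof.
  intros z h rho k Hz Hzh.
  assert (Hr : 0 <= rho) by (eapply Rle_trans; [apply Cmod_ge_0 | exact Hz]).
  induction k.
  - replace (Cminus (Cminus (Cpow (Cplus z h) 1) (Cpow z 1)) (Cmult (Cmult (RtoC (INR 1)) (Cpow z 0)) h)) with (RtoC 0).
    rewrite Cmod_0. rewrite Rmult_0_r. apply Rmult_le_pos. apply Rmult_le_pos. apply pow_le, pos_INR. apply pow_le; lra. apply pow_le, Cmod_ge_0.
    simpl. ring.
  - set (E := Cminus (Cminus (Cpow (Cplus z h) (Datatypes.S k)) (Cpow z (Datatypes.S k)))
                     (Cmult (Cmult (RtoC (INR (Datatypes.S k))) (Cpow z k)) h)) in *.
    assert (Eq : Cminus (Cminus (Cpow (Cplus z h) (Datatypes.S (Datatypes.S k))) (Cpow z (Datatypes.S (Datatypes.S k))))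
                     (Cmult (Cmult (RtoC (INR (Datatypes.S (Datatypes.S k)))) (Cpow z (Datatypes.S k))) h)
             = Cplus (Cmult (Cplus z h) E) (Cmult (Cmult (RtoC (INR (Datatypes.S k))) (Cpow z k)) (Cmult h h))).
    { unfold E. rewrite (S_INR (Datatypes.S k)). rewrite RtoC_plus. simpl Cpow. ring. }
    rewrite Eq.
    eapply Rle_trans. apply Rmult_le_compat_l. lra. apply Cmod_triangle.
    rewrite !Cmod_mult, Cmod_pow, Cmod_RtoC_nonneg by apply pos_INR.
    set (n := INR (Datatypes.S k)) in *.
    assert (Hn : 0 <= n) by apply pos_INR.
    assert (Hn2 : INR (Datatypes.S (Datatypes.S k)) = n + 1) by (unfold n; apply S_INR).
    rewrite Hn2.
    set (hh := Cmod h). assert (0 <= hh) by apply Cmod_ge_0.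
    set (zz := Cmod z) in *. assert (0 <= zz) by apply Cmod_ge_0.
    assert (0 <= Cmod E) by apply Cmod_ge_0.
    assert (Hzk : zz ^ k <= rho ^ k) by (apply pow_incr; lra).
    assert (0 <= zz ^ k) by (apply pow_le; lra).
    assert (T1 : rho * (Cmod (Cplus z h) * Cmod E) <= rho * (n ^ 2 * rho ^ k * hh ^ 2)).
    { replace (rho * (Cmod (Cplus z h) * Cmod E)) with (Cmod (Cplus z h) * (rho * Cmod E)) by ring.
      replace (rho * (n ^ 2 * rho ^ k * hh ^ 2)) with (rho * (n ^ 2 * rho ^ k * hh ^ 2)) by ring.
      apply Rmult_le_compat. apply Cmod_ge_0. apply Rmult_le_pos; lra. exact Hzh. unfold hh; exact IHk. }
    assert (T2 : rho * (n * zz ^ k * (hh * hh)) <= n * rho ^ Datatypes.S k * hh ^ 2).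
    { simpl. replace (rho * (n * zz ^ k * (hh * hh))) with (n * (hh * hh) * (rho * zz ^ k)) by ring.
      replace (n * (rho * rho ^ k) * (hh * (hh * 1))) with (n * (hh * hh) * (rho * rho ^ k)) by ring.
      apply Rmult_le_compat_l. apply Rmult_le_pos; nra. apply Rmult_le_compat_l; lra. }
    assert (T3 : rho * (n ^ 2 * rho ^ k * hh ^ 2) + n * rho ^ Datatypes.S k * hh ^ 2 <= (n + 1) ^ 2 * rho ^ Datatypes.S k * hh ^ 2).
    { simpl. assert (0 <= rho ^ k) by (apply pow_le; lra).
      assert (0 <= rho * rho ^ k * (hh * (hh * 1))) by (apply Rmult_le_pos; [apply Rmult_le_pos|]; nra).
      nra. }
    rewrite Rmult_plus_distr_l. lra.
Qed.

Ltac cnm := change (@plus CNM) with Cplus in *; change (@opp CNM) with Copp in *;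
  change (@scal C_AbsRing CNM) with Cmult in *; change (@minus CNM) with Cminus in *;
  change (@norm C_AbsRing CNM) with Cmod in *.

Lemma u_facts : forall q, 0 <= q < 1 -> 0 <= sqrt (sqrt q) < 1.
Proof.
  intros q Hq. split. apply sqrt_pos.
  assert (Hs1 : sqrt q < 1). { rewrite <- sqrt_1. apply sqrt_lt_1; lra. }
  rewrite <- sqrt_1. apply sqrt_lt_1; try lra. apply sqrt_pos.
Qed.

Lemma termwise : forall (c : nat -> C) (S : C -> C),
 (forall w, Cmod w < 1 -> @is_series C_AbsRing CNM (fun k => Cmult (c k) (Cpow w k)) (S w)) ->
 forall z, Cmod z < 1 -> exists D,
   @is_series C_AbsRing CNM (fun k => Cmult (Cmult (RtoC (INR (Datatypes.S k))) (c (Datatypes.S k))) (Cpow z k)) D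
   /\ C_is_derive S z D.
Proof.
  intros c S HS z Hz.
  set (r0 := Cmod z) in *. assert (Hr0 : 0 <= r0) by apply Cmod_ge_0.
  set (rho := (1 + r0) / 2). set (rho' := (3 + r0) / 4).
  destruct (coef_bound c S rho' HS) as [M [HMpos HM]]. unfold rho'; lra.
  set (q := rho / rho').
  assert (Hq : 0 <= q < 1). { unfold q, rho, rho'. split. apply Rmult_le_pos; [lra|apply Rlt_le, Rinv_0_lt_compat; lra].
     apply Rmult_lt_reg_r with ((3 + r0)/4). lra. unfold Rdiv. rewrite Rmult_assoc, Rinv_l by lra. lra. }
  destruct (u_facts q Hq) as [Hu0 Hu1].
  set (u := sqrt (sqrt q)) in *. set (p := u ^ 2). set (A := 1 / (1 - u)).
  assert (Hp : 0 <= p < 1) by (unfold p; simpl; nra).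
  set (L := M * A ^ 2 / rho').
  assert (HL : 0 < L). { unfold L, A. apply Rmult_lt_0_compat. apply Rmult_lt_0_compat. lra.
     apply pow_lt. apply Rmult_lt_0_compat. lra. apply Rinv_0_lt_compat; lra. apply Rinv_0_lt_compat; unfold rho'; lra. }
  assert (KEY : forall k, INR (Datatypes.S k) ^ 2 * Cmod (c (Datatypes.S k)) * rho ^ k <= L * p ^ k).
  { intros k.
    assert (E : INR (Datatypes.S k) ^ 2 * Cmod (c (Datatypes.S k)) * rho ^ k
               = (INR (Datatypes.S k) ^ 2 * q ^ k) * (Cmod (c (Datatypes.S k)) * rho' ^ (Datatypes.S k)) * / rho').
    { replace rho with (q * rho') by (unfold q; field; unfold rho'; lra).
      rewrite Rpow_mult_distr. simpl. field. unfold rho'; lra. }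
    rewrite E. unfold L. unfold Rdiv.
    replace (M * A ^ 2 * / rho' * p ^ k) with ((A ^ 2 * p ^ k) * M * / rho') by ring.
    apply Rmult_le_compat_r. apply Rlt_le, Rinv_0_lt_compat; unfold rho'; lra.
    apply Rmult_le_compat.
    apply Rmult_le_pos. apply pow_le, pos_INR. apply pow_le; lra.
    apply Rmult_le_pos. apply Cmod_ge_0. apply pow_le; unfold rho'; lra.
    unfold A, p, u. apply sq_bound; exact Hq.
    apply HM. }
  destruct (ex_series_CNM_le (fun k => Cmult (Cmult (RtoC (INR (Datatypes.S k))) (c (Datatypes.S k))) (Cpow z k))
              (fun k => L * p ^ k)) as [D HD].
  { intros k. rewrite !Cmod_mult, Cmod_pow, Cmod_RtoC_nonneg by apply pos_INR. fold r0.
    eapply Rle_trans; [|apply KEY].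
    assert (H1 : 1 <= INR (Datatypes.S k)) by (rewrite S_INR; pose proof (pos_INR k); lra).
    assert (H2 : r0 ^ k <= rho ^ k) by (apply pow_incr; unfold rho; lra).
    assert (0 <= r0 ^ k) by (apply pow_le; lra).
    assert (0 <= Cmod (c (Datatypes.S k))) by apply Cmod_ge_0.
    replace (INR (Datatypes.S k) ^ 2) with (INR (Datatypes.S k) * INR (Datatypes.S k)) by ring.
    assert (0 <= Cmod (c (Datatypes.S k)) * r0 ^ k) by (apply Rmult_le_pos; lra).
    assert (Cmod (c (Datatypes.S k)) * r0 ^ k <= Cmod (c (Datatypes.S k)) * rho ^ k) by (apply Rmult_le_compat_l; lra).
    set (a := INR (Datatypes.S k)) in *.
    apply Rle_trans with (a * (Cmod (c (Datatypes.S k)) * rho ^ k)).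
    rewrite Rmult_assoc. apply Rmult_le_compat_l; lra.
    rewrite (Rmult_assoc (a * a)). apply Rmult_le_compat_r. lra. nra. }
  { exists (L * / (1 - p)).
    assert (Hg : Rabs p < 1) by (rewrite Rabs_pos_eq; lra).
    exact (is_series_scal_l L _ _ (is_series_geom p Hg)). }
  exists D. split. exact HD.
  unfold C_is_derive, is_derive, filterdiff. split. apply is_linear_scal_l.
  intros x Hx. apply (@is_filter_lim_locally_unique C_AbsRing CNM) in Hx. subst x.
  intros eps.
  set (K := L / (rho * (1 - p))).
  assert (HK : 0 < K). { unfold K. apply Rmult_lt_0_compat. lra. apply Rinv_0_lt_compat. apply Rmult_lt_0_compat; unfold rho; lra. }
  assert (Hd : 0 < Rmin (rho - r0) (eps / K)).
  { apply Rmin_pos. unfold rho; lra. apply Rmult_lt_0_compat. apply cond_pos. apply Rinv_0_lt_compat; lra. }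
  exists (mkposreal _ Hd). intros y Hy. change C in y.
  change (Cmod (Cminus y z) < Rmin (rho - r0) (eps / K)) in Hy.
  set (h := Cminus y z) in *.
  assert (Hh0 : 0 <= Cmod h) by apply Cmod_ge_0.
  assert (Hyz : @eq C y (Cplus z h)) by (unfold h; change (@eq C y (Cplus z (Cminus y z))); ring).
  assert (Hyr : Cmod y <= rho).
  { rewrite Hyz. eapply Rle_trans. apply Cmod_triangle. pose proof (Rmin_l (rho - r0) (eps / K)). fold r0. lra. }
  assert (Hy1 : Cmod y < 1) by (unfold rho in Hyr; lra).
  pose proof (is_series_minus _ _ _ _ (HS y Hy1) (HS z Hz)) as H1.
  assert (H2 : @is_series C_AbsRing CNM (fun k => Cminus (Cmult (c (Datatypes.S k)) (Cpow y (Datatypes.S k)))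
                                              (Cmult (c (Datatypes.S k)) (Cpow z (Datatypes.S k))))
                  (Cminus (S y) (S z))).
  { apply (@is_series_incr_1 C_AbsRing CNM (fun k => Cminus (Cmult (c k) (Cpow y k)) (Cmult (c k) (Cpow z k)))).
    replace (@plus CNM (Cminus (S y) (S z)) (Cminus (Cmult (c 0%nat) (Cpow y 0)) (Cmult (c 0%nat) (Cpow z 0))))
      with (@plus CNM (S y) (@opp CNM (S z))).
    apply is_series_ext with (2 := H1). intros k. cnm. reflexivity.
    cnm. simpl. ring. }
  pose proof (is_series_scal_l h _ _ HD) as H3.
  pose proof (is_series_minus _ _ _ _ H2 H3) as H4.
  assert (H5 : @is_series C_AbsRing CNM
     (fun k => Cmult (c (Datatypes.S k)) (Cminus (Cminus (Cpow (Cplus z h) (Datatypes.S k)) (Cpow z (Datatypes.S k)))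
                     (Cmult (Cmult (RtoC (INR (Datatypes.S k))) (Cpow z k)) h)))
     (Cminus (Cminus (S y) (S z)) (Cmult h D))).
  { apply is_series_ext with (2 := H4). intros k. cnm. rewrite <- Hyz. match goal with |- ?a = ?b => change (@eq C a b) end. ring. }
  cnm.
  change (Cmod (Cminus (Cminus (S y) (S z)) (Cmult h D)) <= eps * Cmod h).
  apply Rle_trans with (K * Cmod h ^ 2).
  - apply (norm_series_le _ _ _ H5). intros n.
    eapply Rle_trans. apply Cmod_sum_n.
    eapply Rle_trans with (@sum_n R_AbelianGroup (fun k => (L / rho * Cmod h ^ 2) * p ^ k) n).
    + apply sum_n_R_le. intros k. rewrite Cmod_mult.
      pose proof (pow_rem z h rho k ltac:(unfold rho; fold r0; lra) ltac:(rewrite <- Hyz; exact Hyr)) as HE.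
      set (EE := Cmod _) in HE |- *.
      assert (0 <= EE) by apply Cmod_ge_0.
      assert (Hc0 : 0 <= Cmod (c (Datatypes.S k))) by apply Cmod_ge_0.
      pose proof (KEY k) as Kk.
      assert (Hrho : 0 < rho) by (unfold rho; lra).
      apply Rmult_le_reg_l with rho. exact Hrho.
      replace (rho * (L / rho * Cmod h ^ 2 * p ^ k)) with (L * p ^ k * Cmod h ^ 2) by (field; lra).
      replace (rho * (Cmod (c (Datatypes.S k)) * EE)) with (Cmod (c (Datatypes.S k)) * (rho * EE)) by ring.
      apply Rle_trans with (Cmod (c (Datatypes.S k)) * (INR (Datatypes.S k) ^ 2 * rho ^ k * Cmod h ^ 2)).
      apply Rmult_le_compat_l; assumption.
      replace (Cmod (c (Datatypes.S k)) * (INR (Datatypes.S k) ^ 2 * rho ^ k * Cmod h ^ 2))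
        with ((INR (Datatypes.S k) ^ 2 * Cmod (c (Datatypes.S k)) * rho ^ k) * Cmod h ^ 2) by ring.
      apply Rmult_le_compat_r. apply pow_le; lra. exact Kk.
    + eapply Rle_trans. apply geom_sum_le. apply Rmult_le_pos. unfold Rdiv. apply Rmult_le_pos. lra.
      apply Rlt_le, Rinv_0_lt_compat; unfold rho; lra. apply pow_le; lra. exact Hp.
      apply Req_le. unfold K. field. split; unfold rho; lra.
  - pose proof (Rmin_r (rho - r0) (eps / K)).
    assert (Cmod h <= eps / K) by lra.
    assert (K * Cmod h <= eps). { apply Rmult_le_reg_l with (/ K). apply Rinv_0_lt_compat; lra.
      rewrite <- Rmult_assoc, Rinv_l by lra. replace (/ K * eps) with (eps / K) by (unfold Rdiv; ring). lra. }
    replace (K * Cmod h ^ 2) with ((K * Cmod h) * Cmod h) by ring.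
    apply Rmult_le_compat_r; lra.
Qed.

Fixpoint csum (F : nat -> C) (n : nat) : C :=
  match n with 0%nat => RtoC 0 | Datatypes.S n => Cplus (csum F n) (F n) end.

Lemma csum_ext : forall F G n, (forall m, (m < n)%nat -> F m = G m) -> csum F n = csum G n.
Proof. intros F G n H. induction n; simpl. reflexivity. rewrite IHn, H. reflexivity. lia. intros; apply H; lia. Qed.

Lemma csum_scal : forall K F n, csum (fun m => Cmult K (F m)) n = Cmult K (csum F n).
Proof. intros K F n. induction n; simpl. ring. rewrite IHn. ring. Qed.

Lemma csum_const1 : forall n, csum (fun _ => RtoC 1) n = RtoC (INR n).
Proof. intros n. induction n. reflexivity. simpl csum. rewrite IHn, S_INR, RtoC_plus. reflexivity. Qed.

Lemma Cmod_csum : forall F n b, (forall m, (m < n)%nat -> Cmod (F m) <= b) -> Cmod (csum F n) <= INR n * b.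
Proof.
  intros F n b H. induction n; simpl csum.
  - rewrite Cmod_0. simpl. lra.
  - eapply Rle_trans. apply Cmod_triangle. rewrite S_INR.
    assert (Cmod (csum F n) <= INR n * b) by (apply IHn; intros; apply H; lia).
    assert (Cmod (F n) <= b) by (apply H; lia). lra.
Qed.

Lemma is_series_zero : @is_series C_AbsRing CNM (fun _ => RtoC 0) (RtoC 0).
Proof.
  assert (E : forall n, @sum_n CNM (fun _ => RtoC 0) n = RtoC 0).
  { intros n. induction n. rewrite sum_O. reflexivity. rewrite sum_Sn, IHn. cnm. change (@eq C (Cplus (RtoC 0) (RtoC 0)) (RtoC 0)). ring. }
  intros P [eps HP]. exists 0%nat. intros n _. rewrite E. apply HP. apply ball_center.
Qed.

Lemma is_series_csum : forall (a : nat -> nat -> C) (l : nat -> C) n,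
  (forall m, (m < n)%nat -> @is_series C_AbsRing CNM (a m) (l m)) ->
  @is_series C_AbsRing CNM (fun k => csum (fun m => a m k) n) (csum l n).
Proof.
  intros a l n H. induction n; simpl csum.
  - apply is_series_zero.
  - apply (is_series_plus (V:=CNM)). apply IHn. intros; apply H; lia. apply H; lia.
Qed.

Lemma cis_pow : forall t m, Cpow (cos t, sin t) m = (cos (INR m * t), sin (INR m * t)).
Proof.
  intros t m. induction m.
  - simpl. rewrite Rmult_0_l, cos_0, sin_0. reflexivity.
  - rewrite Cpow_S, IHm. rewrite S_INR. unfold Cmult. simpl.
    replace ((INR m + 1) * t) with (t + INR m * t) by ring.
    rewrite cos_plus, sin_plus. f_equal; ring.
Qed.

Lemma Cmod_cis : forall t, Cmod (cos t, sin t) = 1.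
Proof. intros t. unfold Cmod. simpl. pose proof (sin2_cos2 t). unfold Rsqr in H.
  replace (cos t * (cos t * 1) + sin t * (sin t * 1)) with 1 by lra. apply sqrt_1. Qed.

Lemma cis_ne1 : forall t, 0 < t < 2 * PI -> (cos t, sin t) <> RtoC 1.
Proof.
  intros t Ht E. injection E as E1 E2.
  destruct (Rlt_le_dec t PI) as [H|H].
  - pose proof (sin_gt_0 t ltac:(lra) H). lra.
  - destruct (Req_dec t PI) as [H'|H']. subst. rewrite cos_PI in E1. lra.
    pose proof (sin_lt_0 t ltac:(lra) ltac:(lra)). lra.
Qed.

Lemma geom_csum : forall x n, Cmult (Cminus (RtoC 1) x) (csum (fun m => Cpow x m) n) = Cminus (RtoC 1) (Cpow x n).
Proof. intros x n. induction n; simpl csum. simpl. ring. rewrite Cmult_plus_distr_l, IHn. simpl. ring. Qed.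

Lemma geom_csum0 : forall x n, x <> RtoC 1 -> Cpow x n = RtoC 1 -> csum (fun m => Cpow x m) n = RtoC 0.
Proof.
  intros x n Hx Hn. pose proof (geom_csum x n) as E. rewrite Hn in E.
  assert (Hne : Cminus (RtoC 1) x <> RtoC 0).
  { intro H. apply Hx. replace x with (Cminus (RtoC 1) (Cminus (RtoC 1) x)) by ring. rewrite H. ring. }
  replace (csum (fun m => Cpow x m) n) with (Cmult (Cinv (Cminus (RtoC 1) x)) (Cmult (Cminus (RtoC 1) x) (csum (fun m => Cpow x m) n))).
  rewrite E. ring.
  rewrite Cmult_assoc, Cinv_l by exact Hne. ring.
Qed.

Lemma sum_delta : forall (v : C) j n, (j <= n)%nat ->
  @sum_n C_AbelianGroup (fun l => if Nat.eqb l j then v else RtoC 0) n = v.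
Proof.
  intros v j n Hjn. induction n.
  - assert (j = 0%nat) by lia. subst. rewrite sum_O. reflexivity.
  - destruct (Nat.eq_dec j (Datatypes.S n)) as [E|E].
    + subst j. rewrite sum_Sn. rewrite Nat.eqb_refl.
      assert (Z : @sum_n C_AbelianGroup (fun l => if Nat.eqb l (Datatypes.S n) then v else RtoC 0) n = RtoC 0).
      { clear Hjn. assert (forall m, (m <= n)%nat -> @sum_n C_AbelianGroup (fun l => if Nat.eqb l (Datatypes.S n) then v else RtoC 0) m = RtoC 0).
        { intros m Hm. induction m. rewrite sum_O. replace (Nat.eqb 0 (Datatypes.S n)) with false by (symmetry; apply Nat.eqb_neq; lia). reflexivity.
          rewrite sum_Sn, IHm by lia. replace (Nat.eqb (Datatypes.S m) (Datatypes.S n)) with false by (symmetry; apply Nat.eqb_neq; lia).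
          change (@plus C_AbelianGroup) with Cplus; match goal with |- ?a = ?b => change (@eq C a b) end; ring. }
        apply H. lia. }
      rewrite Z. change (@plus C_AbelianGroup) with Cplus; match goal with |- ?a = ?b => change (@eq C a b) end; ring.
    + rewrite sum_Sn, IHn by lia. replace (Nat.eqb (Datatypes.S n) j) with false by (symmetry; apply Nat.eqb_neq; lia).
      change (@plus C_AbelianGroup) with Cplus; match goal with |- ?a = ?b => change (@eq C a b) end; ring.
Qed.

Lemma cauchy_step : forall (c : nat -> C) (G : C -> C) beta r rho' M j N,
  (forall w, Cmod w < 1 -> @is_series C_AbsRing CNM (fun k => Cmult (c k) (Cpow w k)) (G w)) ->
  (forall w, Cmod w < 1 -> Cmod (G w) <= beta) ->
  0 < r -> r < rho' ->  r < 1 -> 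
  (forall k, Cmod (c k) * rho' ^ k <= M) -> (j < N)%nat ->
  Cmod (c j) * r ^ j <= beta + M * (r / rho') ^ N / (1 - r / rho').
Proof.
  intros c G beta r rho' M j N HS HG Hr0 Hrr Hr1 HM HjN.
  assert (HN : 0 < INR N) by (apply lt_0_INR; lia).
  set (a := 2 * PI / INR N).
  set (om := (cos a, sin a) : C).
  assert (om_pow : forall m, Cpow om m = (cos (INR m * a), sin (INR m * a))) by (intros; apply cis_pow).
  assert (om_mod : forall m, Cmod (Cpow om m) = 1) by (intros; rewrite om_pow; apply Cmod_cis).
  assert (om_N : Cpow om N = RtoC 1).
  { rewrite om_pow. unfold a. replace (INR N * (2 * PI / INR N)) with (2 * PI) by (field; lra).
    rewrite cos_2PI, sin_2PI. reflexivity. }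
  assert (om_ne : forall s, (0 < s < N)%nat -> Cpow om s <> RtoC 1).
  { intros s Hs. rewrite om_pow. apply cis_ne1. unfold a.
    assert (0 < INR s) by (apply lt_0_INR; lia). assert (INR s < INR N) by (apply lt_INR; lia).
    pose proof PI_RGT_0.
    split. apply Rmult_lt_0_compat. lra. apply Rmult_lt_0_compat. lra. apply Rinv_0_lt_compat; lra.
    replace (INR s * (2 * PI / INR N)) with ((2 * PI) * (INR s / INR N)) by (field; lra).
    rewrite <- (Rmult_1_r (2 * PI)) at 2. apply Rmult_lt_compat_l. lra.
    apply Rmult_lt_reg_r with (INR N). lra. unfold Rdiv. rewrite Rmult_assoc, Rinv_l by lra. lra. }
  set (e := fun l => csum (fun m => Cpow (Cpow om (N - j + l)) m) N).
  assert (e_j : e j = RtoC (INR N)).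
  { unfold e. replace (N - j + j)%nat with N by lia. rewrite om_N.
    rewrite <- csum_const1. apply csum_ext. intros. apply Cpow_1_l. }
  assert (e_zero : forall l, (l < N)%nat -> l <> j -> e l = RtoC 0).
  { intros l HlN Hlj. unfold e. apply geom_csum0.
    - destruct (Nat.lt_ge_cases l j).
      + apply om_ne. lia.
      + replace (N - j + l)%nat with (N + (l - j))%nat by lia. rewrite Cpow_add_r, om_N.
        rewrite Cmult_1_l. apply om_ne. lia.
    - rewrite <- Cpow_mult_r. rewrite Nat.mul_comm, Cpow_mult_r, om_N. apply Cpow_1_l. }
  assert (e_bound : forall l, Cmod (e l) <= INR N).
  { intros l. unfold e. rewrite <- (Rmult_1_r (INR N)). apply Cmod_csum.
    intros m _. rewrite Cmod_pow, om_mod. rewrite pow1. lra. }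
  set (kap := fun m => Cmult (Cpow om ((N - j) * m)) (RtoC (/ INR N))).
  set (w := fun m => Cmult (RtoC r) (Cpow om m)).
  assert (Hw : forall m, Cmod (w m) = r).
  { intros m. unfold w. rewrite Cmod_mult, om_mod, Cmod_RtoC_nonneg by lra. ring. }
  set (V := csum (fun m => Cmult (kap m) (G (w m))) N).
  set (t := fun l => Cmult (Cmult (Cmult (c l) (RtoC (r ^ l))) (RtoC (/ INR N))) (e l)).
  assert (Ht : @is_series C_AbsRing CNM t V).
  { apply (@is_series_ext C_AbsRing CNM) with (fun l => csum (fun m => Cmult (kap m) (Cmult (c l) (Cpow (w m) l))) N).
    - intros l. unfold t, e. rewrite <- csum_scal. apply csum_ext. intros m _.
      unfold kap, w. rewrite Cpow_mult_l. rewrite <- RtoC_pow. rewrite <- !Cpow_mult_r.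
      replace ((N - j + l) * m)%nat with ((N - j) * m + m * l)%nat by nia. rewrite Cpow_add_r. ring.
    - apply is_series_csum. intros m _. 
      assert (Hwm : Cmod (w m) < 1) by (rewrite Hw; lra).
      exact (is_series_scal_l (kap m) _ _ (HS (w m) Hwm)). }
  assert (HV : Cmod V <= beta).
  { unfold V. replace beta with (INR N * (beta / INR N)) by (field; lra). apply Cmod_csum.
    intros m _. unfold kap. rewrite !Cmod_mult, om_mod, Cmod_RtoC_nonneg.
    assert (Hwm : Cmod (w m) < 1) by (rewrite Hw; lra). pose proof (HG _ Hwm).
    unfold Rdiv. rewrite Rmult_1_l, Rmult_comm. apply Rmult_le_compat_r. apply Rlt_le, Rinv_0_lt_compat; lra. exact H.
    apply Rlt_le, Rinv_0_lt_compat; lra. }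
  set (v := Cmult (c j) (RtoC (r ^ j))).
  assert (t_lt : forall l, (l < N)%nat -> t l = if Nat.eqb l j then v else RtoC 0).
  { intros l Hl. destruct (Nat.eq_dec l j) as [E|E].
    - subst l. rewrite Nat.eqb_refl. unfold t, v. rewrite e_j.
      rewrite <- Cmult_assoc. rewrite <- RtoC_mult. rewrite Rinv_l by lra. ring.
    - replace (Nat.eqb l j) with false by (symmetry; apply Nat.eqb_neq; exact E).
      unfold t. rewrite e_zero by assumption. ring. }
  assert (Hsum : @sum_n CNM t (pred N) = v).
  { rewrite <- (sum_delta v j (pred N)) by lia. apply sum_n_ext_loc. intros l Hl. apply t_lt. lia. }
  assert (Hshift : @is_series C_AbsRing CNM (fun k => t (N + k)%nat) (Cminus V v)).
  { apply is_series_incr_n. lia. rewrite Hsum. cnm. replace (Cplus (Cminus V v) v) with V by ring. exact Ht. }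
  set (q := r / rho').
  assert (Hq : 0 < q < 1). { unfold q. split. apply Rmult_lt_0_compat. lra. apply Rinv_0_lt_compat; lra.
     apply Rmult_lt_reg_r with rho'. lra. unfold Rdiv. rewrite Rmult_assoc, Rinv_l by lra. lra. }
  assert (HM0 : 0 <= M) by (eapply Rle_trans; [|apply (HM 0%nat)]; apply Rmult_le_pos; [apply Cmod_ge_0|apply pow_le; lra]).
  assert (Htail : Cmod (Cminus V v) <= M * q ^ N / (1 - q)).
  { apply (norm_series_le _ _ _ Hshift). intros n.
    eapply Rle_trans. apply Cmod_sum_n.
    apply Rle_trans with (@sum_n R_AbelianGroup (fun k => (M * q ^ N) * q ^ k) n).
    - apply sum_n_R_le. intros k. unfold t.
      rewrite !Cmod_mult, !Cmod_RtoC_nonneg.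
      2: apply Rlt_le, Rinv_0_lt_compat; lra. 2: apply pow_le; lra.
      set (l := (N + k)%nat).
      assert (Hcl : Cmod (c l) * r ^ l <= M * q ^ l).
      { replace r with (q * rho') by (unfold q; field; lra). rewrite Rpow_mult_distr.
        replace (Cmod (c l) * (q ^ l * rho' ^ l)) with (q ^ l * (Cmod (c l) * rho' ^ l)) by ring.
        rewrite (Rmult_comm M). apply Rmult_le_compat_l. apply pow_le; lra. apply HM. }
      assert (Hel : / INR N * Cmod (e l) <= 1).
      { apply Rmult_le_reg_l with (INR N). lra. rewrite <- Rmult_assoc, Rinv_r by lra. rewrite Rmult_1_l, Rmult_1_r. apply e_bound. }
      assert (0 <= / INR N * Cmod (e l)) by (apply Rmult_le_pos; [apply Rlt_le, Rinv_0_lt_compat; lra| apply Cmod_ge_0]).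
      assert (0 <= Cmod (c l) * r ^ l) by (apply Rmult_le_pos; [apply Cmod_ge_0| apply pow_le; lra]).
      replace (Cmod (c l) * r ^ l * / INR N * Cmod (e l)) with ((Cmod (c l) * r ^ l) * (/ INR N * Cmod (e l))) by ring.
      replace (M * q ^ N * q ^ k) with (M * q ^ l) by (unfold l; rewrite pow_add; ring).
      apply Rle_trans with (Cmod (c l) * r ^ l). rewrite <- (Rmult_1_r (Cmod (c l) * r ^ l)) at 2.
      apply Rmult_le_compat_l; assumption. exact Hcl.
    - apply geom_sum_le. apply Rmult_le_pos. lra. apply pow_le; lra. lra. }
  assert (Hv : Cmod v = Cmod (c j) * r ^ j) by (unfold v; rewrite Cmod_mult, Cmod_RtoC_nonneg; [reflexivity| apply pow_le; lra]).
  rewrite <- Hv.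
  replace v with (Cminus V (Cminus V v)) by ring.
  eapply Rle_trans. unfold Cminus at 1. apply Cmod_triangle. rewrite Cmod_opp.
  lra.
Qed.

Lemma bernoulli : forall d j, 0 <= d <= 1 -> 1 - INR j * d <= (1 - d) ^ j.
Proof.
  intros d j Hd. induction j.
  - simpl. lra.
  - rewrite S_INR. simpl.
    assert (0 <= (1 - d) ^ j) by (apply pow_le; lra).
    assert ((1 - d) * (1 - INR j * d) <= (1 - d) * (1 - d) ^ j) by (apply Rmult_le_compat_l; lra).
    assert (0 <= INR j * d * d) by (apply Rmult_le_pos; [apply Rmult_le_pos; [apply pos_INR|lra]|lra]).
    nra.
Qed.

Lemma cauchy_coef : forall (c : nat -> C) (G : C -> C) beta, 0 < beta ->
  (forall w, Cmod w < 1 -> @is_series C_AbsRing CNM (fun k => Cmult (c k) (Cpow w k)) (G w)) ->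
  (forall w, Cmod w < 1 -> Cmod (G w) <= beta) ->
  forall j, Cmod (c j) <= beta.
Proof.
  intros c G beta Hb HS HG j.
  assert (Step1 : forall r, 0 < r < 1 -> Cmod (c j) * r ^ j <= beta).
  { intros r Hr. set (rho' := (1 + r) / 2).
    destruct (coef_bound c G rho' HS) as [M [HMpos HM]]. unfold rho'; lra.
    set (q := r / rho').
    assert (Hq : 0 < q < 1). { unfold q, rho'. split. apply Rmult_lt_0_compat. lra. apply Rinv_0_lt_compat; lra.
       apply Rmult_lt_reg_r with ((1 + r) / 2). lra. unfold Rdiv. rewrite Rmult_assoc, Rinv_l by lra. lra. }
    apply Rnot_lt_le. intro Hlt.
    set (eps := Cmod (c j) * r ^ j - beta).
    assert (Heps : 0 < eps * (1 - q) / M).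
    { unfold Rdiv. apply Rmult_lt_0_compat. apply Rmult_lt_0_compat. unfold eps; lra. lra. apply Rinv_0_lt_compat; lra. }
    assert (Hqa : Rabs q < 1) by (rewrite Rabs_pos_eq; lra).
    destruct (pow_lt_1_zero q Hqa _ Heps) as [N0 HN0].
    set (N := Nat.max N0 (Datatypes.S j)).
    pose proof (HN0 N (Nat.le_max_l _ _)) as HqN.
    rewrite Rabs_pos_eq in HqN by (apply pow_le; lra).
    pose proof (cauchy_step c G beta r rho' M j N HS HG ltac:(lra) ltac:(unfold rho'; lra) ltac:(lra) HM ltac:(unfold N; lia)) as Hs.
    fold q in Hs.
    assert (M * q ^ N / (1 - q) < eps).
    { apply Rmult_lt_reg_r with ((1 - q) / M). unfold Rdiv; apply Rmult_lt_0_compat; [lra|apply Rinv_0_lt_compat; lra].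
      replace (M * q ^ N / (1 - q) * ((1 - q) / M)) with (q ^ N) by (field; lra).
      replace (eps * ((1 - q) / M)) with (eps * (1 - q) / M) by (field; lra). exact HqN. }
    unfold eps in *. lra. }
  apply Rnot_lt_le. intro Hlt. set (X := Cmod (c j)) in *.
  assert (HX : 0 < X) by lra.
  assert (Hj : 0 <= INR j) by apply pos_INR.
  set (d := (X - beta) / (2 * X * (INR j + 1))).
  assert (Hd0 : 0 < d). { unfold d. apply Rmult_lt_0_compat. lra. apply Rinv_0_lt_compat. nra. }
  assert (Hdj : INR j * d <= (X - beta) / (2 * X)).
  { unfold d. unfold Rdiv. rewrite Rinv_mult. 
    replace (INR j * ((X - beta) * (/ (2 * X) * / (INR j + 1)))) with (((X - beta) * / (2 * X)) * (INR j / (INR j + 1))) by (field; lra).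
    rewrite <- (Rmult_1_r ((X - beta) * / (2 * X))) at 2. apply Rmult_le_compat_l.
    apply Rmult_le_pos. lra. apply Rlt_le, Rinv_0_lt_compat; lra.
    apply Rmult_le_reg_r with (INR j + 1). lra. unfold Rdiv. rewrite Rmult_assoc, Rinv_l by lra. lra. }
  assert (Hd1 : d <= 1 / 2).
  { unfold d. apply Rmult_le_reg_r with (2 * X * (INR j + 1)). nra.
    unfold Rdiv. rewrite Rmult_assoc, Rinv_l by nra. nra. }
  pose proof (Step1 (1 - d) ltac:(lra)) as H1.
  pose proof (bernoulli d j ltac:(lra)) as H2.
  assert (X * (1 - INR j * d) <= X * (1 - d) ^ j) by (apply Rmult_le_compat_l; lra).
  assert (X * (INR j * d) <= X * ((X - beta) / (2 * X))) by (apply Rmult_le_compat_l; lra).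
  replace (X * ((X - beta) / (2 * X))) with ((X - beta) / 2) in H0 by (field; lra).
  lra.
Qed.

Definition RR0 := 547/1000.
Definition bb (k : nat) : R := INR k / (2 * (INR k - 1)) * RR0 ^ (pred k).
Definition T (n : nat) : R := @sum_n_m R_AbelianGroup bb 2 n.

Lemma T10 : T 10 + 11/20 * RR0 ^ 10 / (1 - RR0) < 1.
Proof.
  unfold T. do 8 (rewrite sum_n_Sm; [|lia]). rewrite sum_n_n. simpl. unfold bb, RR0. simpl.
  change (@plus R_AbelianGroup) with Rplus. lra.
Qed.

Lemma bb_nonneg : forall k, (2 <= k)%nat -> 0 <= bb k.
Proof.
  intros k Hk. unfold bb. assert (2 <= INR k) by (replace 2 with (INR 2) by reflexivity; apply le_INR; exact Hk).
  apply Rmult_le_pos. unfold Rdiv. apply Rmult_le_pos. lra. apply Rlt_le, Rinv_0_lt_compat; lra.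
  apply pow_le. unfold RR0; lra.
Qed.

Lemma sum_2_le : forall (a b : nat -> R) n, (forall k, (2 <= k)%nat -> a k <= b k) ->
  @sum_n_m R_AbelianGroup a 2 n <= @sum_n_m R_AbelianGroup b 2 n.
Proof.
  intros a b n H. induction n.
  - rewrite !sum_n_m_zero by lia. apply Rle_refl.
  - destruct (Nat.le_gt_cases 2 (Datatypes.S n)).
    + rewrite !sum_n_Sm by lia. change (@plus R_AbelianGroup) with Rplus. specialize (H (Datatypes.S n) H0). lra.
    + rewrite !sum_n_m_zero by lia. apply Rle_refl.
Qed.

Lemma T_mono : forall n, T n <= T (Datatypes.S n).
Proof.
  intros n. unfold T. destruct (Nat.le_gt_cases 2 (Datatypes.S n)).
  + rewrite (sum_n_Sm _ 2 n) by lia. change (@plus R_AbelianGroup) with Rplus. pose proof (bb_nonneg (Datatypes.S n) H). lra.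
  + rewrite !sum_n_m_zero by lia. apply Rle_refl.
Qed.

Lemma T_le10 : forall d n, (n + d = 10)%nat -> T n <= T 10.
Proof.
  intros d. induction d; intros n Hn.
  - replace n with 10%nat by lia. apply Rle_refl.
  - eapply Rle_trans. apply T_mono. apply IHd. lia.
Qed.

Lemma T_tail : forall m, T (10 + m) <= T 10 + 11/20 * RR0 ^ 10 * (1 - RR0 ^ m) / (1 - RR0).
Proof.
  intros m. induction m.
  - rewrite Nat.add_0_r. simpl. unfold RR0. lra.
  - replace (10 + Datatypes.S m)%nat with (Datatypes.S (10 + m)) by lia.
    unfold T in *. rewrite sum_n_Sm by lia. change (@plus R_AbelianGroup) with Rplus.
    assert (Hb : bb (Datatypes.S (10 + m)) <= 11/20 * RR0 ^ 10 * RR0 ^ m).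
    { unfold bb. replace (pred (Datatypes.S (10 + m))) with (10 + m)%nat by reflexivity. rewrite pow_add.
      set (x := INR (Datatypes.S (10 + m))).
      assert (Hx : 11 <= x). { unfold x. replace 11 with (INR 11) by (simpl; lra). apply le_INR. lia. }
      assert (0 <= RR0 ^ 10 * RR0 ^ m) by (apply Rmult_le_pos; apply pow_le; unfold RR0; lra).
      rewrite <- Rmult_assoc. apply Rmult_le_compat_r. apply pow_le; unfold RR0; lra.
      apply Rmult_le_compat_r. apply pow_le; unfold RR0; lra.
      apply Rmult_le_reg_r with (2 * (x - 1)). lra. unfold Rdiv. rewrite Rmult_assoc, Rinv_l by lra. lra. }
    assert (E : 11/20 * RR0 ^ 10 * (1 - RR0 ^ Datatypes.S m) / (1 - RR0) = 11/20 * RR0 ^ 10 * (1 - RR0 ^ m) / (1 - RR0) + 11/20 * RR0 ^ 10 * RR0 ^ m).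
    { simpl. field. unfold RR0; lra. }
    rewrite E. lra.
Qed.

Lemma T_lt1 : forall n, T n < 1.
Proof.
  intros n. pose proof T10 as H10.
  assert (0 <= 11/20 * RR0 ^ 10 / (1 - RR0)).
  { unfold Rdiv. apply Rmult_le_pos. apply Rmult_le_pos. lra. apply pow_le; unfold RR0; lra. apply Rlt_le, Rinv_0_lt_compat; unfold RR0; lra. }
  destruct (Nat.le_gt_cases n 10).
  - pose proof (T_le10 (10 - n) n ltac:(lia)). lra.
  - replace n with (10 + (n - 10))%nat by lia. eapply Rle_lt_trans. apply T_tail.
    assert (0 <= RR0 ^ (n - 10)) by (apply pow_le; unfold RR0; lra).
    assert (11 / 20 * RR0 ^ 10 * (1 - RR0 ^ (n - 10)) / (1 - RR0) <= 11/20 * RR0 ^ 10 / (1 - RR0)).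
    { unfold Rdiv. apply Rmult_le_compat_r. apply Rlt_le, Rinv_0_lt_compat; unfold RR0; lra.
      assert (0 <= 11/20 * RR0 ^ 10) by (apply Rmult_le_pos; [lra| apply pow_le; unfold RR0; lra]). nra. }
    lra.
Qed.

Definition dd (a : nat -> C) (k : nat) : C :=
  match k with 0%nat | 1%nat => RtoC 0 | _ => a k end.

Lemma is_series_val : forall (a : nat -> C) (l l' : C), @is_series C_AbsRing CNM a l -> l = l' -> @is_series C_AbsRing CNM a l'.
Proof. intros; subst; assumption. Qed.

Lemma series_d : forall (a : nat -> C) (v w : C), tail_series a w v ->
  @is_series C_AbsRing CNM (fun k => Cmult (dd a k) (Cpow w k)) v.
Proof.
  intros a v w H.
  apply (@is_series_decr_1 C_AbsRing CNM).
  apply is_series_val with v. 2: { cnm. simpl. ring. }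
  apply (@is_series_decr_1 C_AbsRing CNM (fun k => Cmult (dd a (Datatypes.S k)) (Cpow w (Datatypes.S k)))).
  apply is_series_val with v. 2: { cnm. simpl. ring. }
  apply (@is_series_ext C_AbsRing CNM) with (2 := H).
  intros k. replace (k + 2)%nat with (Datatypes.S (Datatypes.S k)) by lia. reflexivity.
Qed.


Lemma derive_val : forall (f : C -> C) z l l', C_is_derive f z l -> l = l' -> C_is_derive f z l'.
Proof. intros; subst; assumption. Qed.
Lemma derive_ext : forall (f g : C -> C) z l, C_is_derive f z l -> (forall t, f t = g t) -> C_is_derive g z l.
Proof. intros f g z l H E. exact (@is_derive_ext C_AbsRing CNM f g z l E H). Qed.
Lemma derive_const : forall (c z : C), C_is_derive (fun _ => c) z (RtoC 0).
Proof. intros. exact (@is_derive_const C_AbsRing CNM c z). Qed.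
Lemma derive_id : forall (z : C), C_is_derive (fun w => w) z (RtoC 1).
Proof. intros. exact (@is_derive_id C_AbsRing z). Qed.
Lemma derive_plus : forall f g z df dg, C_is_derive f z df -> C_is_derive g z dg ->
  C_is_derive (fun w => Cplus (f w) (g w)) z (Cplus df dg).
Proof. intros. exact (@is_derive_plus C_AbsRing CNM f g z df dg H H0). Qed.
Lemma derive_mult : forall f g z df dg, C_is_derive f z df -> C_is_derive g z dg ->
  C_is_derive (fun w => Cmult (f w) (g w)) z (Cplus (Cmult df (g z)) (Cmult (f z) dg)).
Proof. intros. exact (@is_derive_mult C_AbsRing f g z df dg H H0 Cmult_comm). Qed.

Lemma pow_deriv : forall k z, C_is_derive (fun w => Cpow w k) z (Cmult (RtoC (INR k)) (Cpow z (pred k))).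
Proof.
  intros k z. induction k.
  - apply derive_val with (RtoC 0). exact (derive_const (RtoC 1) z). simpl. ring.
  - pose proof (derive_mult (fun w => w) (fun w => Cpow w k) z _ _ (derive_id z) IHk) as H.
    apply derive_val with (1 := H).
    rewrite S_INR, RtoC_plus. destruct k.
    + simpl. ring.
    + simpl pred. rewrite Cpow_S. ring.
Qed.

Lemma sum_deriv : forall (F : nat -> C -> C) (dF : nat -> C) m n z,
  (forall k, C_is_derive (F k) z (dF k)) ->
  C_is_derive (fun w => @sum_n_m C_AbelianGroup (fun k => F k w) m n) z (@sum_n_m C_AbelianGroup dF m n).
Proof.
  intros F dF m n z H. induction n.
  - destruct m.
    + apply derive_val with (dF 0%nat). apply derive_ext with (F 0%nat). apply H.
      intros t. rewrite sum_n_n. reflexivity. rewrite sum_n_n. reflexivity.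
    + apply derive_val with (RtoC 0). apply derive_ext with (fun _ => RtoC 0). exact (derive_const (RtoC 0) z).
      intros t. rewrite sum_n_m_zero by lia. reflexivity. rewrite sum_n_m_zero by lia. reflexivity.
  - destruct (Nat.le_gt_cases m (Datatypes.S n)).
    + pose proof (derive_plus _ _ z _ _ IHn (H (Datatypes.S n))) as H1.
      apply derive_ext with (g := fun w => @sum_n_m C_AbelianGroup (fun k => F k w) m (Datatypes.S n)) in H1.
      apply derive_val with (1 := H1).
      rewrite sum_n_Sm by lia. reflexivity.
      intros t. simpl. rewrite sum_n_Sm by lia. reflexivity.
    + apply derive_val with (RtoC 0). apply derive_ext with (fun _ => RtoC 0). exact (derive_const (RtoC 0) z).
      intros t. rewrite sum_n_m_zero by lia. reflexivity. rewrite sum_n_m_zero by lia. reflexivity.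
Qed.

Lemma ps_deriv : forall a n z, C_is_derive (partial_sum a n) z
  (Cplus (RtoC 1) (@sum_n_m C_AbelianGroup (fun k => Cmult (a k) (Cmult (RtoC (INR k)) (Cpow z (pred k)))) 2 n)).
Proof.
  intros a n z.
  assert (Hk : forall k, C_is_derive (fun w => Cmult (a k) (Cpow w k)) z (Cmult (a k) (Cmult (RtoC (INR k)) (Cpow z (pred k))))).
  { intros k. pose proof (derive_mult (fun _ => a k) (fun w => Cpow w k) z _ _ (derive_const (a k) z) (pow_deriv k z)) as H.
    apply derive_val with (1 := H). ring. }
  pose proof (sum_deriv (fun k w => Cmult (a k) (Cpow w k)) _ 2 n z Hk) as Hs.
  pose proof (derive_plus (fun w => w) _ z _ _ (derive_id z) Hs) as H.
  exact H.
Qed.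

Lemma coef_est : forall (f phi : C -> C) (a : nat -> C),
    (forall z, in_disk z -> tail_series a z (Cminus (f z) z)) ->
    (forall z, in_disk z -> (Cmod (phi z) <= 1)%R) ->
    (forall z, in_disk z ->
       forall fd, C_is_derive f z fd ->
       Cminus (Cmult z fd) (f z) = Cmult (Cmult (Cinv (RtoC 2)) (Cpow z 2)) (phi z)) ->
    forall k, (2 <= k)%nat -> (INR k - 1) * Cmod (a k) <= 1/2.
Proof.
  intros f phi a Hser Hb Hrel.
  set (d := dd a).
  assert (HS : forall w, Cmod w < 1 -> @is_series C_AbsRing CNM (fun k => Cmult (d k) (Cpow w k)) (Cminus (f w) w)).
  { intros w Hw. apply series_d. apply Hser. exact Hw. }
  set (G := fun w => Cmult (Cmult (Cinv (RtoC 2)) (Cpow w 2)) (phi w)).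
  set (cc := fun k => Cmult (RtoC (INR k - 1)) (d k)).
  assert (HG : forall w, Cmod w < 1 -> @is_series C_AbsRing CNM (fun k => Cmult (cc k) (Cpow w k)) (G w)).
  { intros w Hw.
    destruct (termwise d (fun w => Cminus (f w) w) HS w Hw) as [D [HD Hder]].
    pose proof (derive_plus _ _ w _ _ Hder (derive_id w)) as Hf.
    apply derive_ext with (g := f) in Hf. 2: { intros t. simpl. ring. }
    pose proof (Hrel w Hw _ Hf) as HR.
    pose proof (is_series_scal_l w _ _ HD) as HwD.
    assert (HwD' : @is_series C_AbsRing CNM (fun k => Cmult (Cmult (RtoC (INR k)) (d k)) (Cpow w k)) (Cmult w D)).
    { apply (@is_series_decr_1 C_AbsRing CNM).
      apply is_series_val with (Cmult w D). 2: { cnm. simpl. ring. }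
      apply (@is_series_ext C_AbsRing CNM) with (2 := HwD). intros k. cnm. rewrite Cpow_S.
      match goal with |- ?x = ?y => change (@eq C x y) end. ring. }
    pose proof (is_series_minus _ _ _ _ HwD' (HS w Hw)) as H2.
    apply (@is_series_ext C_AbsRing CNM) with (b := fun k => Cmult (cc k) (Cpow w k)) in H2.
    2: { intros k. cnm. unfold cc. rewrite RtoC_minus.
      match goal with |- ?x = ?y => change (@eq C x y) end. ring. }
    apply is_series_val with (1 := H2). cnm. unfold G. rewrite <- HR. ring. }
  assert (HGb : forall w, Cmod w < 1 -> Cmod (G w) <= 1/2).
  { intros w Hw. unfold G. rewrite !Cmod_mult, Cmod_pow, Cmod_inv, Cmod_R, Rabs_pos_eq by (try lra; intro E; injection E; lra).
    pose proof (Hb w Hw). assert (0 <= Cmod w) by apply Cmod_ge_0. assert (0 <= Cmod (phi w)) by apply Cmod_ge_0.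
    assert (Cmod w ^ 2 <= 1) by (simpl; nra).
    assert (0 <= Cmod w ^ 2) by (apply pow_le; lra).
    assert (Cmod w ^ 2 * Cmod (phi w) <= 1) by nra. lra. }
  pose proof (cauchy_coef cc G (1/2) ltac:(lra) HG HGb) as Hc.
  intros k Hk. specialize (Hc k). unfold cc, d, dd in Hc.
  destruct k as [|[|k]]; try lia.
  rewrite Cmod_mult, Cmod_R, Rabs_pos_eq in Hc. exact Hc.
  assert (2 <= INR (Datatypes.S (Datatypes.S k))) by (replace 2 with (INR 2) by reflexivity; apply le_INR; lia). lra.
Qed.


Theorem theorem3p3 :
  forall (f phi : C -> C) (a : nat -> C),
    (* f(z) = z + sum_{k>=2} a_k z^k in the unit disk, f analytic there *)
    (forall z, in_disk z -> tail_series a z (Cminus (f z) z)) ->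
    analytic_in_disk f ->
    (* phi analytic in the disk with |phi| <= 1 *)
    analytic_in_disk phi ->
    (forall z, in_disk z -> (Cmod (phi z) <= 1)%R) ->
    (* z f'(z) - f(z) = (1/2) z^2 phi(z) in the disk *)
    (forall z, in_disk z ->
       forall fd, C_is_derive f z fd ->
       Cminus (Cmult z fd) (f z) = Cmult (Cmult (Cinv (RtoC 2)) (Cpow z 2)) (phi z)) ->
    (* conclusion: Re s_n'(z; f) > 0 on |z| <= r0 = 0.547, for all n >= 12 *)
    forall (n : nat), (12 <= n)%nat ->
    forall z, (Cmod z <= 547 / 1000)%R ->
      exists sd, C_is_derive (partial_sum a n) z sd /\ (0 < Re sd)%R.
Proof.
  intros f phi a Hser Han Hphi Hb Hrel n Hn z Hz.
  pose proof (coef_est f phi a Hser Hb Hrel) as Hco.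
  eexists. split. apply ps_deriv.
  rewrite re_plus. simpl (Re (RtoC 1)).
  set (S := @sum_n_m C_AbelianGroup _ 2 n).
  assert (HS : Cmod S <= T n).
  { unfold S, T. eapply Rle_trans. exact (@norm_sum_n_m C_AbsRing CNM _ 2 n).
    apply sum_2_le. intros k Hk. change (@norm C_AbsRing CNM) with Cmod.
    rewrite !Cmod_mult, Cmod_pow, Cmod_R, Rabs_pos_eq by apply pos_INR.
    specialize (Hco k Hk).
    assert (HK : 2 <= INR k) by (replace 2 with (INR 2) by reflexivity; apply le_INR; lia).
    assert (Ha : Cmod (a k) <= 1 / (2 * (INR k - 1))).
    { apply Rmult_le_reg_l with (INR k - 1). lra. replace ((INR k - 1) * (1 / (2 * (INR k - 1)))) with (1/2) by (field; lra). exact Hco. }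
    assert (Hzp : Cmod z ^ pred k <= RR0 ^ pred k) by (apply pow_incr; split; [apply Cmod_ge_0| unfold RR0; exact Hz]).
    assert (0 <= Cmod z ^ pred k) by (apply pow_le, Cmod_ge_0).
    assert (0 <= Cmod (a k)) by apply Cmod_ge_0.
    unfold bb. replace (INR k / (2 * (INR k - 1)) * RR0 ^ pred k) with ((1 / (2 * (INR k - 1))) * (INR k * RR0 ^ pred k)) by (field; lra).
    apply Rmult_le_compat. lra. apply Rmult_le_pos; lra. exact Ha. apply Rmult_le_compat_l; lra. }
  pose proof (T_lt1 n).
  pose proof (re_le_Cmod S). pose proof (Rabs_def2 (Re S)) as _.
  assert (- Cmod S <= Re S). { pose proof (Rle_abs (- Re S)). rewrite Rabs_Ropp in H1. lra. }
  lra.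
Qed.
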